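(* Let $\mathbb A_V=(A,V,\psi_V^A,\sigma_V^A)$ and $\mathbb A_W=(A,W,\psi_W^A,\sigma_W^A)$ be two quadruples (with the same monoid $A$), each satisfying the twisted condition and the cocycle condition, and suppose there exist a link morphism $\Delta_{V\otimes W}:V\otimes W\to V\otimes W$ and a twisting morphism $\tau_W^V:W\otimes V\to V\otimes W$ between them. Define $$\sigma_{V\otimes W}^A=(\mu_A\otimes V\otimes W)\circ(A\otimes\psi_V^A\otimes W)\circ(\sigma_V^A\otimes\sigma_W^A)\circ(V\otimes\tau_W^V\otimes W):V\otimes W\otimes V\otimes W\to A\otimes V\otimes W,$$ and assume $\sigma_{V\otimes W}^A=\sigma_{V\otimes W}^A\circ(\Delta_{V\otimes W}\otimes V\otimes W)$, $\sigma_{V\otimes W}^A=\sigma_{V\otimes W}^A\circ(V\otimes W\otimes\Delta_{V\otimes W})$ and $\sigma_{V\otimes W}^A=(A\otimes\Delta_{V\otimes W})\circ\sigma_{V\otimes W}^A$. Then the quadruple $\mathbb A_{V\otimes W}=(A,V\otimes W,\psi_{V\otimes W}^A,\sigma_{V\otimes W}^A)$ satisfies the twisted condition, the cocycle condition and $\nabla_{A\otimes V\otimes W}\circ\sigma_{V\otimes W}^A=\sigma_{V\otimes W}^A$. Consequently $(A\otimes V\otimes W,\mu_{A\otimes V\otimes W})$ is a weak crossed product, where $$\mu_{A\otimes V\otimes W}=(\mu_A\otimes V\otimes W)\circ(\mu_A\otimes\sigma_{V\otimes W}^A)\circ(A\otimes\psi_{V\otimes W}^A\otimes V\otimes W).$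$
   Context: $\mathcal C$ is a strict monoidal category with tensor product $\otimes$ and unit object $K$, in which every idempotent morphism splits; for an object $X$ and a morphism $f$, $X\otimes f$ means $id_X\otimes f$ and $f\otimes X$ means $f\otimes id_X$. A monoid $(A,\eta_A,\mu_A)$ is an object with unit and associative unital product. A quadruple $\mathbb A_V=(A,V,\psi_V^A,\sigma_V^A)$ consists of a monoid $A$, an object $V$, and morphisms $\psi_V^A:V\otimes A\to A\otimes V$, $\sigma_V^A:V\otimes V\to A\otimes V$ such that $(\mu_A\otimes V)\circ(A\otimes\psi_V^A)\circ(\psi_V^A\otimes A)=\psi_V^A\circ(V\otimes\mu_A)$; put $\nabla_{A\otimes V}=(\mu_A\otimes V)\circ(A\otimes\psi_V^A)\circ(A\otimes V\otimes\eta_A)$ (an idempotent), and it is a standing assumption that $\nabla_{A\otimes V}\circ\sigma_V^A=\sigma_V^A$. Twisted condition: $(\mu_A\otimes V)\circ(A\otimes\psi_V^A)\circ(\sigma_V^A\otimes A)=(\mu_A\otimes V)\circ(A\otimes\sigma_V^A)\circ(\psi_V^A\otimes V)\circ(V\otimes\psi_V^A)$. Cocycle condition: $(\mu_A\otimes V)\circ(A\otimes\sigma_V^A)\circ(\sigma_V^A\otimes V)=(\mu_A\otimes V)\circ(A\otimes\sigma_V^A)\circ(\psi_V^A\otimes V)\circ(V\otimes\sigma_V^A)$. If both hold, $(A\otimes V,\mu_{A\otimes V})$ with $\mu_{A\otimes V}=(\mu_A\otimes V)\circ(\mu_A\otimes\sigma_V^A)\circ(A\otimes\psi_V^A\otimes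 V)$ is called a weak crossed product (this product is then associative). Link morphism: given quadruples $\mathbb A_V,\mathbb A_W$ and $\Delta_{V\otimes W}:V\otimes W\to V\otimes W$, put $\psi_{V\otimes W}^A=(\psi_V^A\otimes W)\circ(V\otimes\psi_W^A)\circ(\Delta_{V\otimes W}\otimes A)$ and $\nabla_{A\otimes V\otimes W}=(\mu_A\otimes V\otimes W)\circ(A\otimes\psi_{V\otimes W}^A)\circ(A\otimes V\otimes W\otimes\eta_A)$; $\Delta_{V\otimes W}$ is a link morphism if $\psi_{V\otimes W}^A=(A\otimes\Delta_{V\otimes W})\circ\psi_{V\otimes W}^A$ and $\psi_{V\otimes W}^A=\nabla_{A\otimes V\otimes W}\circ(\psi_V^A\otimes W)\circ(V\otimes\psi_W^A)$. Twisting morphism: $\tau_W^V:W\otimes V\to V\otimes W$ such that (i) $(\psi_V^A\otimes W)\circ(V\otimes\psi_W^A)\circ(\tau_W^V\otimes A)=(A\otimes\tau_W^V)\circ(\psi_W^A\otimes V)\circ(W\otimes\psi_V^A)$; (ii) $(\mu_A\otimes V\otimes W)\circ(A\otimes\sigma_V^A\otimes W)\circ(\psi_V^A\otimes\tau_W^V)\circ(V\otimes\sigma_W^A\otimes V)\circ(\tau_W^V\otimes W\otimes V)=(\mu_A\otimes V\otimes W)\circ(A\otimes\psi_V^A\otimes W)\circ(A\otimes V\otimes\sigma_W^A)\circ(A\otimes\tau_W^V\otimes W)\circ(\psi_W^A\otimes V\otimes W)\circ(W\otimes\sigma_V^A\otimes W)\circ(W\otimes V\otimes\tau_W^V)$.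 The twisted and cocycle conditions for $\mathbb A_{V\otimes W}$ are the same formulas with $V$ replaced by $V\otimes W$. *)

(* Defs.v *)
(* A strict monoidal category is presented in the standard single-sorted
   ("arrows-only") way: a type of objects, a type of morphisms, domain and
   codomain maps, identities, a (total) composition whose behaviour is only
   constrained on composable pairs, and a tensor product on objects and on
   morphisms that is strictly associative and strictly unital. *)

Record SMCat := {
  Ob : Type;
  Mor : Type;
  dom : Mor -> Ob;
  cod : Mor -> Ob;
  idm : Ob -> Mor;
  comp : Mor -> Mor -> Mor;
  otens : Ob -> Ob -> Ob;
  mtens : Mor -> Mor -> Mor;
  unitob : Ob;
  dom_idm : forall X, dom (idm X) = X;
  cod_idm : forall X, cod (idm X) = X;
  dom_comp : forall g f, cod f = dom g -> dom (comp g f) = dom f;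
  cod_comp : forall g f, cod f = dom g -> cod (comp g f) = cod g;
  comp_idm_r : forall f, comp f (idm (dom f)) = f;
  comp_idm_l : forall f, comp (idm (cod f)) f = f;
  comp_assoc : forall h g f, cod f = dom g -> cod g = dom h ->
      comp h (comp g f) = comp (comp h g) f;
  dom_mtens : forall f g, dom (mtens f g) = otens (dom f) (dom g);
  cod_mtens : forall f g, cod (mtens f g) = otens (cod f) (cod g);
  mtens_idm : forall X Y, mtens (idm X) (idm Y) = idm (otens X Y);
  mtens_comp : forall g1 f1 g2 f2, cod f1 = dom g1 -> cod f2 = dom g2 ->
      mtens (comp g1 f1) (comp g2 f2) = comp (mtens g1 g2) (mtens f1 f2);
  otens_assoc : forall X Y Z, otens (otens X Y) Z = otens X (otens Y Z);
  otens_unit_l : forall X, otens unitob X = X;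
  otens_unit_r : forall X, otens X unitob = X;
  mtens_assoc : forall f g h, mtens (mtens f g) h = mtens f (mtens g h);
  mtens_unit_l : forall f, mtens (idm unitob) f = f;
  mtens_unit_r : forall f, mtens f (idm unitob) = f
}.

Arguments Ob {_}.
Arguments Mor {_}.
Arguments dom {_} _.
Arguments cod {_} _.
Arguments idm {_} _.
Arguments comp {_} _ _.
Arguments otens {_} _ _.
Arguments mtens {_} _ _.
Arguments unitob {_}.

Declare Scope smc_scope.
Open Scope smc_scope.
Notation "g ∘ f" := (comp g f) (at level 40, left associativity) : smc_scope.
Notation "f ⊗ g" := (mtens f g) (at level 34, left associativity) : smc_scope.
Notation "X ⊠ Y" := (otens X Y) (at level 34, left associativity) : smc_scope.

Definition idempotents_split (C : SMCat) : Prop :=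
  forall e : @Mor C, dom e = cod e -> e ∘ e = e ->
    exists (X : @Ob C) (p i : @Mor C),
      dom p = dom e /\ cod p = X /\ dom i = X /\ cod i = cod e /\
      i ∘ p = e /\ p ∘ i = idm X.

Section Defs.
Context {C : SMCat}.

Definition is_monoid (A : @Ob C) (eta mu : @Mor C) : Prop :=
  dom eta = unitob /\ cod eta = A /\ dom mu = A ⊠ A /\ cod mu = A /\
  mu ∘ (mu ⊗ idm A) = mu ∘ (idm A ⊗ mu) /\
  mu ∘ (eta ⊗ idm A) = idm A /\
  mu ∘ (idm A ⊗ eta) = idm A.

(* A quadruple (A, V, psi, sigma) over the monoid (A, eta, mu) (without the
   standing assumption nabla o sigma = sigma, which is stated separately). *)
Definition is_quadruple (A : @Ob C) (eta mu : @Mor C) (V : @Ob C) (psi sigma : @Mor C) : Prop :=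
  is_monoid A eta mu /\
  dom psi = V ⊠ A /\ cod psi = A ⊠ V /\
  dom sigma = V ⊠ V /\ cod sigma = A ⊠ V /\
  (mu ⊗ idm V) ∘ (idm A ⊗ psi) ∘ (psi ⊗ idm A) = psi ∘ (idm V ⊗ mu).

Definition nabla (A : @Ob C) (eta mu : @Mor C) (V : @Ob C) (psi : @Mor C) : @Mor C :=
  (mu ⊗ idm V) ∘ (idm A ⊗ psi) ∘ (idm A ⊗ idm V ⊗ eta).

Definition twisted_cond (A : @Ob C) (mu : @Mor C) (V : @Ob C) (psi sigma : @Mor C) : Prop :=
  (mu ⊗ idm V) ∘ (idm A ⊗ psi) ∘ (sigma ⊗ idm A)
  = (mu ⊗ idm V) ∘ (idm A ⊗ sigma) ∘ (psi ⊗ idm V) ∘ (idm V ⊗ psi).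

Definition cocycle_cond (A : @Ob C) (mu : @Mor C) (V : @Ob C) (psi sigma : @Mor C) : Prop :=
  (mu ⊗ idm V) ∘ (idm A ⊗ sigma) ∘ (sigma ⊗ idm V)
  = (mu ⊗ idm V) ∘ (idm A ⊗ sigma) ∘ (psi ⊗ idm V) ∘ (idm V ⊗ sigma).

Definition wcp_product (A : @Ob C) (mu : @Mor C) (V : @Ob C) (psi sigma : @Mor C) : @Mor C :=
  (mu ⊗ idm V) ∘ (mu ⊗ sigma) ∘ (idm A ⊗ psi ⊗ idm V).

(* (A ⊗ V, mu_{A⊗V}) is a weak crossed product: by definition, the twisted and
   cocycle conditions hold (mu_{A⊗V} is then the product above). *)
Definition weak_crossed_product (A : @Ob C) (mu : @Mor C) (V : @Ob C) (psi sigma : @Mor C) : Prop :=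
  twisted_cond A mu V psi sigma /\ cocycle_cond A mu V psi sigma.

Definition psi_tens (A V W : @Ob C) (psiV psiW Delta : @Mor C) : @Mor C :=
  (psiV ⊗ idm W) ∘ (idm V ⊗ psiW) ∘ (Delta ⊗ idm A).

Definition is_link_morphism (A : @Ob C) (eta mu : @Mor C) (V W : @Ob C)
    (psiV psiW Delta : @Mor C) : Prop :=
  dom Delta = V ⊠ W /\ cod Delta = V ⊠ W /\
  psi_tens A V W psiV psiW Delta
    = (idm A ⊗ Delta) ∘ psi_tens A V W psiV psiW Delta /\
  psi_tens A V W psiV psiW Delta
    = nabla A eta mu (V ⊠ W) (psi_tens A V W psiV psiW Delta)
      ∘ (psiV ⊗ idm W) ∘ (idm V ⊗ psiW).

Definition is_twisting_morphism (A : @Ob C) (mu : @Mor C) (V W : @Ob C)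
    (psiV sigmaV psiW sigmaW tau : @Mor C) : Prop :=
  dom tau = W ⊠ V /\ cod tau = V ⊠ W /\
  (psiV ⊗ idm W) ∘ (idm V ⊗ psiW) ∘ (tau ⊗ idm A)
    = (idm A ⊗ tau) ∘ (psiW ⊗ idm V) ∘ (idm W ⊗ psiV) /\
  (mu ⊗ idm V ⊗ idm W) ∘ (idm A ⊗ sigmaV ⊗ idm W) ∘ (psiV ⊗ tau)
    ∘ (idm V ⊗ sigmaW ⊗ idm V) ∘ (tau ⊗ idm W ⊗ idm V)
  = (mu ⊗ idm V ⊗ idm W) ∘ (idm A ⊗ psiV ⊗ idm W) ∘ (idm A ⊗ idm V ⊗ sigmaW)
    ∘ (idm A ⊗ tau ⊗ idm W) ∘ (psiW ⊗ idm V ⊗ idm W)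
    ∘ (idm W ⊗ sigmaV ⊗ idm W) ∘ (idm W ⊗ idm V ⊗ tau).

Definition sigma_tens (A : @Ob C) (mu : @Mor C) (V W : @Ob C)
    (psiV sigmaV sigmaW tau : @Mor C) : @Mor C :=
  (mu ⊗ idm V ⊗ idm W) ∘ (idm A ⊗ psiV ⊗ idm W) ∘ (sigmaV ⊗ sigmaW)
    ∘ (idm V ⊗ tau ⊗ idm W).

End Defs.

(* Main.v *)
Require Import Defs.
From Stdlib Require Import List.
Import ListNotations.

Section Infra.
Context {C : SMCat}.

Fixpoint obj (xs : list (@Ob C)) : @Ob C :=
  match xs with
  | nil => unitob
  | x :: xs' => match xs' with nil => x | _ => x ⊠ obj xs' end
  end.

Lemma obj_cons x xs : obj (x :: xs) = x ⊠ obj xs.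
Proof. destruct xs; simpl; [rewrite otens_unit_r|]; reflexivity. Qed.

Lemma obj_app xs ys : obj (xs ++ ys) = obj xs ⊠ obj ys.
Proof.
  induction xs as [|x xs IH]; simpl app.
  - simpl. now rewrite otens_unit_l.
  - rewrite !obj_cons, IH. now rewrite otens_assoc.
Qed.

Record layer := mkL { lx : list (@Ob C); lf : @Mor C; ld : list (@Ob C); lc : list (@Ob C); ly : list (@Ob C) }.

Definition interp (l : layer) : @Mor C := idm (obj (lx l)) ⊗ lf l ⊗ idm (obj (ly l)).
Definition ldom (l : layer) := lx l ++ ld l ++ ly l.
Definition lcod (l : layer) := lx l ++ lc l ++ ly l.
Definition wtl (l : layer) : Prop := dom (lf l) = obj (ld l) /\ cod (lf l) = obj (lc l).

Fixpoint cmpL (l : list layer) : @Mor C :=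
  match l with
  | nil => idm unitob
  | x :: l' => match l' with nil => interp x | _ => interp x ∘ cmpL l' end
  end.

Fixpoint chain (l : list layer) : Prop :=
  match l with
  | x :: l' => match l' with nil => True | y :: _ => lcod y = ldom x /\ chain l' end
  | nil => True
  end.

Definition WT (l : list layer) : Prop := Forall wtl l /\ chain l.

Definition dl := mkL nil (idm unitob) nil nil nil.
Definition fdom (l : list layer) := ldom (last l dl).
Definition fcod (l : list layer) := lcod (hd dl l).

Lemma dom_interp x : wtl x -> dom (interp x) = obj (ldom x).
Proof. intros [H1 H2]. unfold interp, ldom. rewrite !dom_mtens, !dom_idm, H1, !obj_app. now rewrite otens_assoc. Qed.
Lemma cod_interp x : wtl x -> cod (interp x) = obj (lcod x).
Proof. intros [H1 H2]. unfold interp, lcod. rewrite !cod_mtens, !cod_idm, H2, !obj_app. now rewrite otens_assoc. Qed.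

Lemma WT_cons x l : WT (x :: l) -> WT l.
Proof. intros [H1 H2]. inversion H1; subst. split; auto. destruct l; simpl in *; tauto. Qed.

Lemma dc_cmpL l : WT l -> l <> nil -> dom (cmpL l) = obj (fdom l) /\ cod (cmpL l) = obj (fcod l).
Proof.
  induction l as [|x l IH]; intros Hw Hn; [congruence|].
  destruct l as [|y l].
  - simpl. destruct Hw as [H _]. inversion H; subst. split; [apply dom_interp|apply cod_interp]; auto.
  - change (cmpL (x :: y :: l)) with (interp x ∘ cmpL (y :: l)).
    assert (Hw' := WT_cons _ _ Hw).
    destruct Hw as [Hf [Hc _]]. inversion Hf; subst.
    destruct (IH Hw') as [IH1 IH2]; [discriminate|].
    assert (E : cod (cmpL (y :: l)) = dom (interp x)).
    { rewrite IH2, dom_interp by auto. unfold fcod. simpl. congruence. }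
    rewrite dom_comp, cod_comp by exact E. split; [exact IH1|].
    rewrite cod_interp by auto. reflexivity.
Qed.

Lemma WT_app l1 l2 : WT (l1 ++ l2) <-> WT l1 /\ WT l2 /\ (l1 <> nil -> l2 <> nil -> fcod l2 = fdom l1).
Proof.
  induction l1 as [|x l1 IH].
  - simpl. split; [intros H; split; [split; [constructor|exact I]|split; [exact H|intros; congruence]]|tauto].
  - destruct l1 as [|y l1].
    + simpl. destruct l2 as [|z l2].
      * simpl. split; [intros H; split; [exact H|split; [split; [constructor|exact I]|intros; congruence]]|tauto].
      * unfold WT; simpl. split.
        -- intros [Hf [Hc Hch]]. inversion Hf; subst. repeat split; auto.
        -- intros [[Hf1 _] [[Hf2 Hc2] Hx]]. inversion Hf1; subst. repeat split; auto.
           now apply Hx.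
    + change ((x :: y :: l1) ++ l2) with (x :: ((y :: l1) ++ l2)).
      split.
      * intros Hw. assert (Hw' := WT_cons _ _ Hw). apply IH in Hw'.
        destruct Hw' as [Hw1 [Hw2 Hx]]. destruct Hw as [Hf [Hc _]]. inversion Hf; subst.
        split; [|split]; auto.
        -- split. constructor; auto. apply Hw1. split; [exact Hc| apply Hw1].
        -- intros _ Hn. change (fdom (x :: y :: l1)) with (fdom (y :: l1)). apply Hx; auto; discriminate.
      * intros [Hw1 [Hw2 Hx]]. assert (Hw1' := WT_cons _ _ Hw1).
        assert (H : WT ((y :: l1) ++ l2)).
        { apply IH. split; auto. split; auto. intros _ Hn. change (fdom (y :: l1)) with (fdom (x :: y :: l1)). apply Hx; auto; discriminate. }
        destruct Hw1 as [Hf [Hc _]]. inversion Hf; subst.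
        split. constructor; auto. apply H. split; [exact Hc| apply H].
Qed.

Lemma cmpL_app l1 l2 : l1 <> nil -> l2 <> nil -> WT (l1 ++ l2) -> cmpL (l1 ++ l2) = cmpL l1 ∘ cmpL l2.
Proof.
  induction l1 as [|x l1 IH]; intros H1 H2 Hw; [congruence|].
  destruct l1 as [|y l1].
  - destruct l2; [congruence|]. reflexivity.
  - change ((x :: y :: l1) ++ l2) with (x :: ((y :: l1) ++ l2)).
    assert (Hw' := WT_cons _ _ Hw).
    change (cmpL (x :: ((y :: l1) ++ l2))) with (interp x ∘ cmpL ((y :: l1) ++ l2)).
    rewrite IH by (auto; discriminate).
    change (cmpL (x :: y :: l1)) with (interp x ∘ cmpL (y :: l1)).
    apply (WT_app (y :: l1) l2) in Hw'. destruct Hw' as [Hw1 [Hw2 Hx]].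
    apply (WT_app (x :: y :: l1) l2) in Hw. destruct Hw as [Hw0 _].
    destruct Hw0 as [Hf [Hc _]]. inversion Hf; subst.
    apply comp_assoc.
    + rewrite (proj2 (dc_cmpL l2 Hw2 H2)), (proj1 (dc_cmpL _ Hw1 ltac:(discriminate))).
      rewrite Hx by (auto; discriminate). reflexivity.
    + rewrite (proj2 (dc_cmpL _ Hw1 ltac:(discriminate))), dom_interp by auto.
      unfold fcod. simpl. congruence.
Qed.

Definition whisk (xs ys : list (@Ob C)) (x : layer) : layer :=
  mkL (xs ++ lx x) (lf x) (ld x) (lc x) (ly x ++ ys).

Lemma interp_whisk xs ys x : interp (whisk xs ys x) = idm (obj xs) ⊗ interp x ⊗ idm (obj ys).
Proof.
  unfold interp, whisk; simpl. rewrite !obj_app, <- !mtens_idm, !mtens_assoc. reflexivity.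
Qed.

Lemma ldom_whisk xs ys x : ldom (whisk xs ys x) = xs ++ ldom x ++ ys.
Proof. unfold ldom, whisk; simpl. now rewrite <- !app_assoc. Qed.
Lemma lcod_whisk xs ys x : lcod (whisk xs ys x) = xs ++ lcod x ++ ys.
Proof. unfold lcod, whisk; simpl. now rewrite <- !app_assoc. Qed.

Lemma WT_whisk xs ys s : WT s -> WT (map (whisk xs ys) s).
Proof.
  intros [Hf Hc]. split.
  - apply Forall_map. eapply Forall_impl; [|exact Hf]. intros a Ha. exact Ha.
  - clear Hf. induction s as [|x s IH]; simpl; auto.
    destruct s as [|y s]; simpl; auto. destruct Hc as [H1 H2]. split.
    + rewrite lcod_whisk, ldom_whisk. congruence.
    + apply IH. exact H2.
Qed.

Lemma fdom_whisk xs ys s : s <> nil -> fdom (map (whisk xs ys) s) = xs ++ fdom s ++ ys.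
Proof.
  intros Hn. unfold fdom. rewrite <- ldom_whisk. f_equal.
  induction s as [|x s IH]; [congruence|]. destruct s as [|y s]; [reflexivity|].
  change (last (map (whisk xs ys) (x :: y :: s)) dl) with (last (map (whisk xs ys) (y :: s)) dl).
  change (last (x :: y :: s) dl) with (last (y :: s) dl). apply IH. discriminate.
Qed.
Lemma fcod_whisk xs ys s : s <> nil -> fcod (map (whisk xs ys) s) = xs ++ fcod s ++ ys.
Proof. intros Hn. destruct s; [congruence|]. unfold fcod. simpl. apply lcod_whisk. Qed.

Lemma tens3_comp (X Y : @Ob C) a b : cod b = dom a ->
  idm X ⊗ (a ∘ b) ⊗ idm Y = (idm X ⊗ a ⊗ idm Y) ∘ (idm X ⊗ b ⊗ idm Y).
Proof.
  intros H.
  assert (EX : idm X = idm X ∘ idm X). { rewrite <- (cod_idm _ X) at 2. now rewrite comp_idm_l. }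
  assert (EY : idm Y = idm Y ∘ idm Y). { rewrite <- (cod_idm _ Y) at 2. now rewrite comp_idm_l. }
  rewrite <- (mtens_comp _ (idm X ⊗ a) (idm X ⊗ b) (idm Y) (idm Y)).
  - rewrite <- (mtens_comp _ (idm X) (idm X) a b).
    + now rewrite <- EX, <- EY.
    + now rewrite cod_idm, dom_idm.
    + exact H.
  - rewrite cod_mtens, dom_mtens, cod_idm, dom_idm, H. reflexivity.
  - now rewrite cod_idm, dom_idm.
Qed.

Lemma cmpL_whisk xs ys s : WT s -> s <> nil -> cmpL (map (whisk xs ys) s) = idm (obj xs) ⊗ cmpL s ⊗ idm (obj ys).
Proof.
  induction s as [|x s IH]; intros Hw Hn; [congruence|].
  destruct s as [|y s].
  - simpl. apply interp_whisk.
  - change (cmpL (map (whisk xs ys) (x :: y :: s))) with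
      (interp (whisk xs ys x) ∘ cmpL (map (whisk xs ys) (y :: s))).
    change (cmpL (x :: y :: s)) with (interp x ∘ cmpL (y :: s)).
    assert (Hw' := WT_cons _ _ Hw).
    rewrite IH, interp_whisk by (auto; discriminate).
    rewrite tens3_comp; auto.
    rewrite (proj2 (dc_cmpL _ Hw' ltac:(discriminate))).
    destruct Hw as [Hf [Hc _]]. inversion Hf; subst.
    rewrite dom_interp by auto. unfold fcod; simpl. congruence.
Qed.

Lemma rwR m m' post : m <> nil -> m' <> nil -> WT (m ++ post) -> WT m' -> fdom m' = fdom m ->
  fcod m' = fcod m -> cmpL m = cmpL m' -> cmpL (m ++ post) = cmpL (m' ++ post).
Proof.
  intros H1 H2 Hw Hw' Hd Hc E. destruct post as [|p post].
  - rewrite !app_nil_r. exact E.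
  - assert (Hw2 : WT (m' ++ p :: post)).
    { apply WT_app in Hw. apply WT_app. destruct Hw as [? [? Hx]]. split; [|split]; auto.
      intros _ _. rewrite Hd. apply Hx; auto; discriminate. }
    rewrite !cmpL_app by (auto; discriminate). now rewrite E.
Qed.

Lemma fdom_app l1 l2 : l2 <> nil -> fdom (l1 ++ l2) = fdom l2.
Proof.
  intros H. unfold fdom. induction l1 as [|x l1 IH]; [reflexivity|].
  rewrite <- IH. simpl. destruct (l1 ++ l2) eqn:E; [|reflexivity].
  apply app_eq_nil in E. tauto.
Qed.
Lemma fcod_app l1 l2 : l1 <> nil -> fcod (l1 ++ l2) = fcod l1.
Proof. intros H. destruct l1; [congruence|]. reflexivity. Qed.

Lemma rwL pre k k' : k <> nil -> k' <> nil -> WT (pre ++ k) -> WT k' -> fdom k' = fdom k ->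
  fcod k' = fcod k -> cmpL k = cmpL k' -> cmpL (pre ++ k) = cmpL (pre ++ k').
Proof.
  intros H1 H2 Hw Hw' Hd Hc E. destruct pre as [|p pre].
  - exact E.
  - assert (Hw2 : WT ((p :: pre) ++ k')).
    { apply WT_app in Hw. apply WT_app. destruct Hw as [? [? Hx]]. split; [|split]; auto.
      intros _ _. rewrite Hc. apply Hx; auto; discriminate. }
    rewrite !cmpL_app by (auto; discriminate). now rewrite E.
Qed.

Lemma rw_gen pre s s' post xs ys : s <> nil -> s' <> nil ->
  WT (pre ++ map (whisk xs ys) s ++ post) -> WT s -> WT s' -> fdom s' = fdom s -> fcod s' = fcod s ->
  cmpL s = cmpL s' ->
  cmpL (pre ++ map (whisk xs ys) s ++ post) = cmpL (pre ++ map (whisk xs ys) s' ++ post).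
Proof.
  intros H1 H2 Hw Hws Hw' Hd Hc E.
  assert (N1 : map (whisk xs ys) s <> nil) by (destruct s; simpl; congruence).
  assert (N2 : map (whisk xs ys) s' <> nil) by (destruct s'; simpl; congruence).
  assert (Hm' := WT_whisk xs ys _ Hw').
  assert (Hw1 := proj1 (proj2 (proj1 (WT_app _ _) Hw))).
  assert (Hw1' := proj1 (proj1 (WT_app _ _) Hw1)).
  assert (Em : cmpL (map (whisk xs ys) s) = cmpL (map (whisk xs ys) s')).
  { rewrite !cmpL_whisk by auto. now rewrite E. }
  assert (Hd' : fdom (map (whisk xs ys) s') = fdom (map (whisk xs ys) s)) by (rewrite !fdom_whisk by auto; congruence).
  assert (Hc' : fcod (map (whisk xs ys) s') = fcod (map (whisk xs ys) s)) by (rewrite !fcod_whisk by auto; congruence).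
  apply rwL; auto.
  - intro Hx. apply app_eq_nil in Hx. tauto.
  - intro Hx. apply app_eq_nil in Hx. tauto.
  - apply WT_app. apply WT_app in Hw1. destruct Hw1 as [? [? Hx]]. split; [|split]; auto.
    intros _ Hp. rewrite Hd'. apply Hx; auto.
  - destruct post as [|p post]; [rewrite !app_nil_r; auto|].
    rewrite !fdom_app by discriminate. reflexivity.
  - rewrite !fcod_app by auto. exact Hc'.
  - apply rwR; auto.
Qed.


Lemma interchange1 (F G : @Mor C) P Q' : dom F = P -> cod G = Q' ->
  (F ⊗ idm Q') ∘ (idm P ⊗ G) = F ⊗ G.
Proof.
  intros H1 H2. rewrite <- mtens_comp.
  - rewrite <- H1, <- H2, comp_idm_r, comp_idm_l. reflexivity.
  - now rewrite cod_idm.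
  - now rewrite dom_idm.
Qed.
Lemma interchange2 (F G : @Mor C) P' Q : cod F = P' -> dom G = Q ->
  (idm P' ⊗ G) ∘ (F ⊗ idm Q) = F ⊗ G.
Proof.
  intros H1 H2. rewrite <- mtens_comp.
  - rewrite <- H1, <- H2, comp_idm_r, comp_idm_l. reflexivity.
  - now rewrite dom_idm.
  - now rewrite cod_idm.
Qed.

Lemma idm_app xs ys : idm (obj (xs ++ ys)) = idm (obj xs) ⊗ idm (obj ys).
Proof. now rewrite obj_app, mtens_idm. Qed.

Lemma swapLR xa f da ca M g db cb yb :
  wtl (mkL xa f da ca (M ++ cb ++ yb)) -> wtl (mkL (xa ++ da ++ M) g db cb yb) ->
  cmpL [mkL xa f da ca (M ++ cb ++ yb); mkL (xa ++ da ++ M) g db cb yb] =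
  cmpL [mkL (xa ++ ca ++ M) g db cb yb; mkL xa f da ca (M ++ db ++ yb)].
Proof.
  intros [Hdf Hcf] [Hdg Hcg]. simpl in *.
  unfold interp; simpl.
  rewrite !idm_app, <- !mtens_assoc.
  set (F := idm (obj xa) ⊗ f ⊗ idm (obj M)).
  rewrite (mtens_assoc _ F (idm (obj cb))), (mtens_idm _ (obj cb) (obj yb)).
  rewrite (mtens_assoc _ (idm (obj xa) ⊗ idm (obj da) ⊗ idm (obj M)) g).
  rewrite (mtens_idm _ (obj xa) (obj da)), (mtens_idm _ (obj xa ⊠ obj da) (obj M)).
  rewrite interchange1.
  2: { unfold F. rewrite !dom_mtens, !dom_idm, Hdf. reflexivity. }
  2: { rewrite cod_mtens, cod_idm, Hcg. reflexivity. }
  rewrite (mtens_assoc _ F (idm (obj db))), (mtens_idm _ (obj db) (obj yb)).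
  rewrite (mtens_assoc _ (idm (obj xa) ⊗ idm (obj ca) ⊗ idm (obj M)) g).
  rewrite (mtens_idm _ (obj xa) (obj ca)), (mtens_idm _ (obj xa ⊠ obj ca) (obj M)).
  rewrite interchange2.
  2: { unfold F. rewrite !cod_mtens, !cod_idm, Hcf. reflexivity. }
  2: { rewrite dom_mtens, dom_idm, Hdg. reflexivity. }
  reflexivity.
Qed.

Lemma swapRL xb g db cb M f da ca ya :
  wtl (mkL (xb ++ cb ++ M) f da ca ya) -> wtl (mkL xb g db cb (M ++ da ++ ya)) ->
  cmpL [mkL (xb ++ cb ++ M) f da ca ya; mkL xb g db cb (M ++ da ++ ya)] =
  cmpL [mkL xb g db cb (M ++ ca ++ ya); mkL (xb ++ db ++ M) f da ca ya].
Proof.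
  intros [H1 H2] [H3 H4]. symmetry. apply swapLR; split; simpl in *; assumption.
Qed.

End Infra.


Ltac wtl_tac := unfold wtl; simpl; split; assumption.
Ltac wt_tac := cbv [app map whisk lx ly lf ld lc WT];
  split; [repeat (apply Forall_cons; [wtl_tac|]); apply Forall_nil
         | simpl; repeat split].

Ltac step n E :=
  let T := type of E in
  let T := eval cbv [app] in T in
  lazymatch T with cmpL ?s = cmpL ?s' =>
  lazymatch goal with |- cmpL ?l = ?R =>
    let k := eval compute in (length s) in
    let pre := eval cbv [firstn] in (firstn n l) in
    let sub := eval cbv [firstn skipn] in (firstn k (skipn n l)) in
    let post := eval cbv [skipn Nat.add] in (skipn (n + k) l) in
    lazymatch sub with ?a :: _ => lazymatch s with ?b :: _ =>
    let xs := eval cbv [firstn length lx Nat.sub] in (firstn (length (lx a) - length (lx b)) (lx a)) in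
    let ys := eval cbv [skipn length ly] in (skipn (length (ly b)) (ly a)) in
    transitivity (cmpL (pre ++ map (whisk xs ys) s' ++ post));
    [ change (cmpL l) with (cmpL (pre ++ map (whisk xs ys) s ++ post));
      apply rw_gen; [discriminate|discriminate|wt_tac|wt_tac|wt_tac|reflexivity|reflexivity|exact E]
    | cbv [app map whisk lx ly lf ld lc] ]
    end end end end.

Ltac sw n :=
  lazymatch goal with |- cmpL ?l = ?R =>
    let a := eval cbv [nth] in (nth n l dl) in
    let b := eval cbv [nth] in (nth (S n) l dl) in
    lazymatch a with mkL ?xa ?f ?da ?ca ?ya =>
    lazymatch b with mkL ?xb ?g ?db ?cb ?yb =>
    let c := eval compute in (Nat.leb (length xa + length da) (length xb)) in
    lazymatch c with
    | true =>
      let M := eval cbv [skipn length Nat.add] in (skipn (length xa + length da) xb) in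
      step n (swapLR xa f da ca M g db cb yb ltac:(wtl_tac) ltac:(wtl_tac))
    | false =>
      let M := eval cbv [skipn length Nat.add] in (skipn (length xb + length cb) xa) in
      step n (swapRL xb g db cb M f da ca ya ltac:(wtl_tac) ltac:(wtl_tac))
    end end end end.


Section Main.
Context {C : SMCat} (A V W : @Ob C) (eta mu psiV sigmaV psiW sigmaW Delta tau : @Mor C).
Context (dmu : dom mu = A ⊠ A) (cmu : cod mu = A) (deta : dom eta = unitob) (ceta : cod eta = A)
  (dpsiV : dom psiV = V ⊠ A) (cpsiV : cod psiV = A ⊠ V) (dsigV : dom sigmaV = V ⊠ V) (csigV : cod sigmaV = A ⊠ V)
  (dpsiW : dom psiW = W ⊠ A) (cpsiW : cod psiW = A ⊠ W) (dsigW : dom sigmaW = W ⊠ W) (csigW : cod sigmaW = A ⊠ W)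
  (dtau : dom tau = W ⊠ V) (ctau : cod tau = V ⊠ W) (dDel : dom Delta = V ⊠ W) (cDel : cod Delta = V ⊠ W).

Notation Lmu xs ys := (mkL xs mu [A;A] [A] ys).
Notation Leta xs ys := (mkL xs eta [] [A] ys).
Notation Lpsi xs ys := (mkL xs psiV [V;A] [A;V] ys).
Notation Lsig xs ys := (mkL xs sigmaV [V;V] [A;V] ys).
Notation Lphi xs ys := (mkL xs psiW [W;A] [A;W] ys).
Notation Lrho xs ys := (mkL xs sigmaW [W;W] [A;W] ys).
Notation Ltau xs ys := (mkL xs tau [W;V] [V;W] ys).
Notation LDel xs ys := (mkL xs Delta [V;W] [V;W] ys).


Context (Hass : mu ∘ (mu ⊗ idm A) = mu ∘ (idm A ⊗ mu))
  (HQV : (mu ⊗ idm V) ∘ (idm A ⊗ psiV) ∘ (psiV ⊗ idm A) = psiV ∘ (idm V ⊗ mu))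
  (HQW : (mu ⊗ idm W) ∘ (idm A ⊗ psiW) ∘ (psiW ⊗ idm A) = psiW ∘ (idm W ⊗ mu))
  (HnW : nabla A eta mu W psiW ∘ sigmaW = sigmaW)
  (HtV : twisted_cond A mu V psiV sigmaV)
  (HcV : cocycle_cond A mu V psiV sigmaV)
  (HtW : twisted_cond A mu W psiW sigmaW)
  (HcW : cocycle_cond A mu W psiW sigmaW)
  (HT1 : (psiV ⊗ idm W) ∘ (idm V ⊗ psiW) ∘ (tau ⊗ idm A)
    = (idm A ⊗ tau) ∘ (psiW ⊗ idm V) ∘ (idm W ⊗ psiV))
  (HT2 : (mu ⊗ idm V ⊗ idm W) ∘ (idm A ⊗ sigmaV ⊗ idm W) ∘ (psiV ⊗ tau)
    ∘ (idm V ⊗ sigmaW ⊗ idm V) ∘ (tau ⊗ idm W ⊗ idm V)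
  = (mu ⊗ idm V ⊗ idm W) ∘ (idm A ⊗ psiV ⊗ idm W) ∘ (idm A ⊗ idm V ⊗ sigmaW)
    ∘ (idm A ⊗ tau ⊗ idm W) ∘ (psiW ⊗ idm V ⊗ idm W)
    ∘ (idm W ⊗ sigmaV ⊗ idm W) ∘ (idm W ⊗ idm V ⊗ tau)).

Ltac atoms := rewrite ?dmu, ?cmu, ?deta, ?ceta, ?dpsiV, ?cpsiV, ?dsigV, ?csigV, ?dpsiW, ?cpsiW,
  ?dsigW, ?csigW, ?dtau, ?ctau, ?dDel, ?cDel.
Ltac rty := repeat progress (rewrite ?dom_mtens, ?cod_mtens, ?dom_idm, ?cod_idm; atoms;
   try (rewrite dom_comp by rty); try (rewrite cod_comp by rty));
  rewrite ?otens_assoc, ?otens_unit_l, ?otens_unit_r; reflexivity.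
Ltac nrm := atoms; rewrite ?otens_assoc, ?otens_unit_l, ?otens_unit_r; repeat rewrite <- mtens_idm;
  rewrite ?mtens_assoc, ?mtens_unit_l, ?mtens_unit_r; repeat (rewrite <- comp_assoc by rty).
Ltac nrm_in H := rewrite ?dmu, ?cmu, ?deta, ?ceta, ?dpsiV, ?cpsiV, ?dsigV, ?csigV, ?dpsiW, ?cpsiW,
  ?dsigW, ?csigW, ?dtau, ?ctau, ?dDel, ?cDel in H;
  rewrite ?otens_assoc, ?otens_unit_l, ?otens_unit_r in H; repeat rewrite <- mtens_idm in H;
  rewrite ?mtens_assoc, ?mtens_unit_l, ?mtens_unit_r in H; repeat (rewrite <- comp_assoc in H by rty).
Ltac lay H := cbv [cmpL interp lx ly lf obj app]; let H' := fresh in pose proof H as H';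
  unfold twisted_cond, cocycle_cond, nabla in H'; nrm_in H'; nrm; exact H'.

Lemma tens_split (f g : @Mor C) : f ⊗ g = (idm (cod f) ⊗ g) ∘ (f ⊗ idm (dom g)).
Proof. symmetry. apply interchange2; reflexivity. Qed.

Lemma Lass : cmpL [Lmu [] []; Lmu [] [A]] = cmpL [Lmu [] []; Lmu [A] []].
Proof. lay Hass. Qed.
Lemma LQV : cmpL [Lmu [] [V]; Lpsi [A] []; Lpsi [] [A]] = cmpL [Lpsi [] []; Lmu [V] []].
Proof. lay HQV. Qed.
Lemma LQW : cmpL [Lmu [] [W]; Lphi [A] []; Lphi [] [A]] = cmpL [Lphi [] []; Lmu [W] []].
Proof. lay HQW. Qed.
Lemma LTV : cmpL [Lmu [] [V]; Lpsi [A] []; Lsig [] [A]] = cmpL [Lmu [] [V]; Lsig [A] []; Lpsi [] [V]; Lpsi [V] []].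
Proof. lay HtV. Qed.
Lemma LTW : cmpL [Lmu [] [W]; Lphi [A] []; Lrho [] [A]] = cmpL [Lmu [] [W]; Lrho [A] []; Lphi [] [W]; Lphi [W] []].
Proof. lay HtW. Qed.
Lemma LCV : cmpL [Lmu [] [V]; Lsig [A] []; Lsig [] [V]] = cmpL [Lmu [] [V]; Lsig [A] []; Lpsi [] [V]; Lsig [V] []].
Proof. lay HcV. Qed.
Lemma LCW : cmpL [Lmu [] [W]; Lrho [A] []; Lrho [] [W]] = cmpL [Lmu [] [W]; Lrho [A] []; Lphi [] [W]; Lrho [W] []].
Proof. lay HcW. Qed.
Lemma LNW : cmpL [Lmu [] [W]; Lphi [A] []; Leta [A;W] []; Lrho [] []] = cmpL [Lrho [] []].
Proof. lay HnW. Qed.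
Lemma LT1 : cmpL [Lpsi [] [W]; Lphi [V] []; Ltau [] [A]] = cmpL [Ltau [A] []; Lphi [] [V]; Lpsi [W] []].
Proof. lay HT1. Qed.
Lemma LT2 : cmpL [Lmu [] [V;W]; Lsig [A] [W]; Ltau [A;V] []; Lpsi [] [W;V]; Lrho [V] [V]; Ltau [] [W;V]]
  = cmpL [Lmu [] [V;W]; Lpsi [A] [W]; Lrho [A;V] []; Ltau [A] [W]; Lphi [] [V;W]; Lsig [W] [W]; Ltau [W;V] []].
Proof. pose proof HT2 as H. rewrite (tens_split psiV tau) in H. lay H. Qed.


Context (Hs1 : sigma_tens A mu V W psiV sigmaV sigmaW tau
         = sigma_tens A mu V W psiV sigmaV sigmaW tau ∘ (Delta ⊗ idm (V ⊠ W)))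
  (Hs2 : sigma_tens A mu V W psiV sigmaV sigmaW tau
         = sigma_tens A mu V W psiV sigmaV sigmaW tau ∘ (idm (V ⊠ W) ⊗ Delta))
  (Hs3 : sigma_tens A mu V W psiV sigmaV sigmaW tau
         = (idm A ⊗ Delta) ∘ sigma_tens A mu V W psiV sigmaV sigmaW tau).

Notation sigL := [Lmu [] [V;W]; Lpsi [A] [W]; Lrho [A;V] []; Lsig [] [W;W]; Ltau [V] [W]].

Lemma LS1 : cmpL sigL = cmpL (sigL ++ [LDel [] [V;W]]).
Proof. pose proof Hs1 as H. unfold sigma_tens in H. rewrite !(tens_split sigmaV sigmaW) in H. lay H. Qed.
Lemma LS2 : cmpL sigL = cmpL (sigL ++ [LDel [V;W] []]).
Proof. pose proof Hs2 as H. unfold sigma_tens in H. rewrite !(tens_split sigmaV sigmaW) in H. lay H. Qed.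
Lemma LS3 : cmpL sigL = cmpL (LDel [A] [] :: sigL).
Proof. pose proof Hs3 as H. unfold sigma_tens in H. rewrite !(tens_split sigmaV sigmaW) in H. lay H. Qed.

Lemma NPhi : cmpL ([Lmu [] [V;W]; Lpsi [A] [W]; Lphi [A;V] []; Leta [A;V;W] []] ++ sigL) = cmpL sigL.
Proof.
  cbn [app]. sw 3. sw 4. sw 2. sw 1. step 0 Lass. sw 3. step 1 LQV. step 2 LNW. reflexivity.
Qed.

Lemma CocPhi : cmpL [Lmu [] [V;W]; Lmu [A] [V;W]; Lpsi [A;A] [W]; Lrho [A;A;V] []; Lsig [A] [W;W]; Ltau [A;V] [W]; Lmu [] [V;W;V;W]; Lpsi [A] [W;V;W]; Lrho [A;V] [V;W]; Lsig [] [W;W;V;W]; Ltau [V] [W;V;W]]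
  = cmpL [Lmu [] [V;W]; Lmu [A] [V;W]; Lpsi [A;A] [W]; Lrho [A;A;V] []; Lsig [A] [W;W]; Ltau [A;V] [W]; Lpsi [] [W;V;W]; Lphi [V] [V;W]; Lmu [V;W] [V;W]; Lpsi [V;W;A] [W]; Lrho [V;W;A;V] []; Lsig [V;W] [W;W]; Ltau [V;W;V] [W]].
Proof.
  sw 8. step 6 LTV. sw 5. sw 6. sw 4. sw 3. sw 2. step 0 (eq_sym Lass). step 1 Lass. sw 2. sw 3.
  step 4 LCV. sw 3. sw 2. step 1 (eq_sym Lass). sw 2. sw 3. sw 4. sw 8. sw 7. step 5 LQV. step 6 LT2.
  step 5 (eq_sym LQV). sw 4. sw 3. sw 2. step 1 Lass. sw 2. sw 3. sw 7. step 4 (eq_sym LTV).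
  sw 3. sw 4. sw 2. step 0 Lass. step 1 Lass. step 2 LQV. sw 6. sw 5. step 3 LCW.
  step 2 (eq_sym LQV). sw 4. step 1 (eq_sym Lass). sw 2. sw 3. sw 7. sw 6. step 4 LTV.
  sw 10. sw 9. step 7 LT1. sw 10. sw 9. sw 8. sw 7. sw 3. sw 2. step 1 Lass. step 0 (eq_sym Lass).
  sw 1. sw 2. sw 3. sw 4. step 5 LQV. sw 6. sw 5. sw 10. sw 9. step 7 LQW. reflexivity.
Qed.

Lemma TwPhi : cmpL [Lmu [] [V;W]; Lpsi [A] [W]; Lphi [A;V] []; Lmu [] [V;W;A]; Lpsi [A] [W;A]; Lrho [A;V] [A]; Lsig [] [W;W;A]; Ltau [V] [W;A]]
 = cmpL [Lmu [] [V;W]; Lmu [A] [V;W]; Lpsi [A;A] [W]; Lrho [A;A;V] []; Lsig [A] [W;W]; Ltau [A;V] [W]; Lpsi [] [W;V;W]; Lphi [V] [V;W]; Lpsi [V;W] [W]; Lphi [V;W;V] []].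
Proof.
  sw 2. sw 1. step 0 Lass. sw 3. step 1 LQV. step 2 LTW. step 1 (eq_sym LQV). sw 3.
  step 0 (eq_sym Lass). sw 1. sw 2. sw 6. sw 5. step 3 LTV. sw 8. step 6 LT1. sw 5. sw 2. sw 1. step 0 Lass. reflexivity.
Qed.

Lemma TwFull : cmpL [Lmu [] [V;W]; Lpsi [A] [W]; Lphi [A;V] []; LDel [A] [A]; Lmu [] [V;W;A]; Lpsi [A] [W;A]; Lrho [A;V] [A]; Lsig [] [W;W;A]; Ltau [V] [W;A]]
 = cmpL [Lmu [] [V;W]; Lmu [A] [V;W]; Lpsi [A;A] [W]; Lrho [A;A;V] []; Lsig [A] [W;W]; Ltau [A;V] [W]; Lpsi [] [W;V;W]; Lphi [V] [V;W]; LDel [] [A;V;W]; Lpsi [V;W] [W]; Lphi [V;W;V] []; LDel [V;W] [A]].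
Proof.
  step 3 (eq_sym LS3). step 3 LS2. step 3 LS1. step 0 TwPhi. symmetry. sw 8. sw 9. reflexivity.
Qed.

Lemma CocFull : cmpL [Lmu [] [V;W]; Lmu [A] [V;W]; Lpsi [A;A] [W]; Lrho [A;A;V] []; Lsig [A] [W;W]; Ltau [A;V] [W]; Lmu [] [V;W;V;W]; Lpsi [A] [W;V;W]; Lrho [A;V] [V;W]; Lsig [] [W;W;V;W]; Ltau [V] [W;V;W]]
  = cmpL [Lmu [] [V;W]; Lmu [A] [V;W]; Lpsi [A;A] [W]; Lrho [A;A;V] []; Lsig [A] [W;W]; Ltau [A;V] [W]; Lpsi [] [W;V;W]; Lphi [V] [V;W]; LDel [] [A;V;W]; Lmu [V;W] [V;W]; Lpsi [V;W;A] [W]; Lrho [V;W;A;V] []; Lsig [V;W] [W;W]; Ltau [V;W;V] [W]].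
Proof.
  step 6 LS1. step 0 CocPhi. symmetry. sw 8. sw 9. sw 10. sw 11. sw 12. reflexivity.
Qed.

Lemma NFull : cmpL [Lmu [] [V;W]; Lpsi [A] [W]; Lphi [A;V] []; LDel [A] [A]; Leta [A;V;W] []; Lmu [] [V;W]; Lpsi [A] [W]; Lrho [A;V] []; Lsig [] [W;W]; Ltau [V] [W]] = cmpL sigL.
Proof.
  sw 3. step 4 (eq_sym LS3). exact NPhi.
Qed.

Lemma dist_l (h g f : @Mor C) : cod f = dom g -> h ⊗ (g ∘ f) = (h ⊗ g) ∘ (idm (dom h) ⊗ f).
Proof. intros H. rewrite <- mtens_comp; [now rewrite comp_idm_r| now rewrite cod_idm | exact H]. Qed.
Lemma dist_r (g f h : @Mor C) : cod f = dom g -> (g ∘ f) ⊗ h = (g ⊗ h) ∘ (f ⊗ idm (dom h)).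
Proof. intros H. rewrite <- mtens_comp; [now rewrite comp_idm_r| exact H | now rewrite cod_idm]. Qed.

Ltac nrmD := repeat (first [rewrite dist_l by rty | rewrite dist_r by rty]);
  rewrite ?dom_mtens, ?cod_mtens, ?dom_idm, ?cod_idm; nrm.
Ltac unlay H := unfold twisted_cond, cocycle_cond, nabla, psi_tens, sigma_tens;
  rewrite ?(tens_split sigmaV sigmaW); nrmD; let H' := fresh in pose proof H as H';
  cbv [cmpL interp lx ly lf obj app] in H'; nrm_in H'; exact H'.

Lemma conclusion :
  let psiVW := psi_tens A V W psiV psiW Delta in
  let sigmaVW := sigma_tens A mu V W psiV sigmaV sigmaW tau in
  twisted_cond A mu (V ⊠ W) psiVW sigmaVW /\
  cocycle_cond A mu (V ⊠ W) psiVW sigmaVW /\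
  nabla A eta mu (V ⊠ W) psiVW ∘ sigmaVW = sigmaVW.
Proof.
  intros psiVW sigmaVW. subst psiVW sigmaVW. split; [|split].
  - unlay TwFull.
  - unlay CocFull.
  - unlay NFull.
Qed.

End Main.

Theorem mainTheorem2 (C : SMCat) (Hsplit : idempotents_split C)
  (A : @Ob C) (eta mu : @Mor C)
  (V W : @Ob C) (psiV sigmaV psiW sigmaW Delta tau : @Mor C)
  (HqV : is_quadruple A eta mu V psiV sigmaV)
  (HqW : is_quadruple A eta mu W psiW sigmaW)
  (HnV : nabla A eta mu V psiV ∘ sigmaV = sigmaV)
  (HnW : nabla A eta mu W psiW ∘ sigmaW = sigmaW)
  (HtV : twisted_cond A mu V psiV sigmaV)
  (HcV : cocycle_cond A mu V psiV sigmaV)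
  (HtW : twisted_cond A mu W psiW sigmaW)
  (HcW : cocycle_cond A mu W psiW sigmaW)
  (Hlink : is_link_morphism A eta mu V W psiV psiW Delta)
  (Htw : is_twisting_morphism A mu V W psiV sigmaV psiW sigmaW tau)
  (Hs1 : sigma_tens A mu V W psiV sigmaV sigmaW tau
         = sigma_tens A mu V W psiV sigmaV sigmaW tau ∘ (Delta ⊗ idm (V ⊠ W)))
  (Hs2 : sigma_tens A mu V W psiV sigmaV sigmaW tau
         = sigma_tens A mu V W psiV sigmaV sigmaW tau ∘ (idm (V ⊠ W) ⊗ Delta))
  (Hs3 : sigma_tens A mu V W psiV sigmaV sigmaW tau
         = (idm A ⊗ Delta) ∘ sigma_tens A mu V W psiV sigmaV sigmaW tau) :
  let psiVW := psi_tens A V W psiV psiW Delta in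
  let sigmaVW := sigma_tens A mu V W psiV sigmaV sigmaW tau in
  twisted_cond A mu (V ⊠ W) psiVW sigmaVW /\
  cocycle_cond A mu (V ⊠ W) psiVW sigmaVW /\
  nabla A eta mu (V ⊠ W) psiVW ∘ sigmaVW = sigmaVW /\
  weak_crossed_product A mu (V ⊠ W) psiVW sigmaVW.
Proof.
  intros psiVW sigmaVW.
  destruct HqV as [[deta [ceta [dmu [cmu [Hass _]]]]] [dpsiV [cpsiV [dsigV [csigV HQV]]]]].
  destruct HqW as [_ [dpsiW [cpsiW [dsigW [csigW HQW]]]]].
  destruct Hlink as [dDel [cDel _]].
  destruct Htw as [dtau [ctau [HT1 HT2]]].
  destruct (conclusion A V W eta mu psiV sigmaV psiW sigmaW Delta tau dmu cmu deta ceta dpsiV cpsiV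
    dsigV csigV dpsiW cpsiW dsigW csigW dtau ctau dDel cDel Hass HQV HQW HnW HtV HcV HtW HcW HT1 HT2
    Hs1 Hs2 Hs3) as [H1 [H2 H3]].
  split; [exact H1|split; [exact H2|split; [exact H3|split; [exact H1|exact H2]]]].
Qed.
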